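(* Let $(x_n)$ be generated by (HPPA). Let ${\rm a},{\rm b},{\rm B},{\rm E}:\mathbb{N}\to\mathbb{N}$ be monotone functions satisfying (Q1), (Q3'), (Q3), (Q4) respectively. Let $\mathcal{E},\mathcal{D}\in\mathbb{N}$ satisfy $\mathcal{E}\geq 1+\sum_{i=0}^{{\rm E}(0)}\|e_i\|$ and $\mathcal{D}\geq\|x_0-p\|$ for some $p\in S$, and set $N:=\max\{2\mathcal{D},\mathcal{D}+\mathcal{E}\}$. Then for every $k\in\mathbb{N}$ and every monotone $f:\mathbb{N}\to\mathbb{N}$ there exist $n\leq\Psi(k,f)$ and $x\in B_N$ such that $$\forall i\in[n,f(n)]\ \left(\|J_{\beta_i}(x)-x\|\leq\frac{1}{f(n)+1}\ \wedge\ \langle x_0-x,\,x_i-x\rangle\leq\frac{1}{k+1}\right),$$ where $\Psi(k,f):=\chi_1\big(24N(w_{\hat\nu,N}^{(R)}(0)+1)^2\big)$ with: $R:=4N^4(k+1)^2$; $\nu_f(m):=\delta_{\rm b}(f(m),f(m))$ where $\delta_{\rm b}(k',n'):=\max\{2,{\rm b}(n')\}(k'+1)-1$; $\hat\nu(m):=\nu_f(\chi_1(m))$; $w_{g,N}(m):=\max\{g(24N(m+1)^2),24N(m+1)^2\}$; $\xi(k'):=\max\{{\rm a}(2(2\mathcal{D}+\mathcal{E})(k'+1)-1),{\rm E}(2k'+1)+1\}$; and $\chi_1(k'):=\max\{\xi(4k'+3),{\rm B}(8(\mathcal{D}+\mathcal{E})(k'+1)-1)\}+1$.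
   Context: $X$ is a real Hilbert space, $\mathsf{A}:X\to 2^X$ a maximal monotone operator with zero set $S=\{x:0\in\mathsf{A}(x)\}$, assumed nonempty. For $\beta>0$, $J_\beta:=(Id+\beta\mathsf{A})^{-1}$ is the resolvent, a single-valued nonexpansive map with fixed point set $S$. Given $(\alpha_n)\subset\,]0,1[$, $(\beta_n)\subset(0,\infty)$, $(e_n)\subset X$, $x_0\in X$, (HPPA) is the sequence $x_{n+1}:=\alpha_n x_0+(1-\alpha_n)(J_{\beta_n}(x_n)+e_n)$. (Q1): $\forall k\,\forall n\geq{\rm a}(k)\ \alpha_n\leq\frac{1}{k+1}$. (Q3'): $\forall n\ \beta_n\leq{\rm b}(n)$. (Q3): $\forall k\,\forall n\geq{\rm B}(k)\ \beta_n\geq k$. (Q4): $\forall k\,\forall n\ \sum_{i={\rm E}(k)+1}^{{\rm E}(k)+n}\|e_i\|\leq\frac{1}{k+1}$. $B_N:=\{x\in X:\|x-p\|\leq N\}$ with $p$ the point in $S$ from the hypothesis. Monotone means nondecreasing. $g^{(R)}$ is the $R$-fold composition of $g$ ($g^{(0)}$ the identity). $[a,b]$ is the set of naturals $m$ with $a\le m\le b$. *)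

(* Defs.v *)
From Stdlib Require Import Reals Lra Lia Arith.
Open Scope R_scope.

Record HilbertSpace := {
  hcar :> Type;
  hzero : hcar;
  hadd : hcar -> hcar -> hcar;
  hopp : hcar -> hcar;
  hscal : R -> hcar -> hcar;
  hinner : hcar -> hcar -> R;
  hadd_assoc : forall x y z, hadd x (hadd y z) = hadd (hadd x y) z;
  hadd_comm : forall x y, hadd x y = hadd y x;
  hadd_zero : forall x, hadd x hzero = x;
  hadd_opp : forall x, hadd x (hopp x) = hzero;
  hscal_assoc : forall a b x, hscal a (hscal b x) = hscal (a * b) x;
  hscal_one : forall x, hscal 1 x = x;
  hscal_distr_l : forall a x y, hscal a (hadd x y) = hadd (hscal a x) (hscal a y);
  hscal_distr_r : forall a b x, hscal (a + b) x = hadd (hscal a x) (hscal b x);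
  hinner_sym : forall x y, hinner x y = hinner y x;
  hinner_add_l : forall x y z, hinner (hadd x y) z = hinner x z + hinner y z;
  hinner_scal_l : forall a x y, hinner (hscal a x) y = a * hinner x y;
  hinner_pos : forall x, 0 <= hinner x x;
  hinner_def : forall x, hinner x x = 0 -> x = hzero;
  hcomplete : forall u : nat -> hcar,
    (forall eps, 0 < eps -> exists M, forall m n, (M <= m)%nat -> (M <= n)%nat ->
        sqrt (hinner (hadd (u m) (hopp (u n))) (hadd (u m) (hopp (u n)))) < eps) ->
    exists l, forall eps, 0 < eps -> exists M, forall n, (M <= n)%nat ->
        sqrt (hinner (hadd (u n) (hopp l)) (hadd (u n) (hopp l))) < eps
}.

Section Ops.
Variable X : HilbertSpace.
Definition hsub (x y : X) : X := hadd X x (hopp X y).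
Definition hnorm (x : X) : R := sqrt (hinner X x x).
End Ops.
Arguments hsub {X}.
Arguments hnorm {X}.

(** A set-valued operator A : X -> 2^X, given by its graph: [A x u] means u ∈ A(x). *)
Definition monotone_op {X : HilbertSpace} (A : X -> X -> Prop) : Prop :=
  forall x y u v, A x u -> A y v -> 0 <= hinner X (hsub x y) (hsub u v).

Definition maximal_monotone {X : HilbertSpace} (A : X -> X -> Prop) : Prop :=
  monotone_op A /\
  forall x u, (forall y v, A y v -> 0 <= hinner X (hsub x y) (hsub u v)) -> A x u.

(** [J] is the resolvent family of A: J β x is the point y with x ∈ y + β A(y),
    i.e. J β = (Id + β A)^{-1} (single-valued and total for maximal monotone A). *)
Definition is_resolvent {X : HilbertSpace} (A : X -> X -> Prop) (J : R -> X -> X) : Prop :=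
  forall beta x, 0 < beta -> A (J beta x) (hscal X (/ beta) (hsub x (J beta x))).

Fixpoint hppa {X : HilbertSpace} (J : R -> X -> X) (alpha beta : nat -> R)
  (e : nat -> X) (x0 : X) (n : nat) : X :=
  match n with
  | O => x0
  | S m => hadd X (hscal X (alpha m) x0)
             (hscal X (1 - alpha m) (hadd X (J (beta m) (hppa J alpha beta e x0 m)) (e m)))
  end.

Fixpoint sum_from (g : nat -> R) (s len : nat) : R :=
  match len with
  | O => 0
  | S l => g s + sum_from g (S s) l
  end.

Definition monotone_nat (f : nat -> nat) : Prop :=
  forall m n, (m <= n)%nat -> (f m <= f n)%nat.

Section Rate.
Local Open Scope nat_scope.
Variables (a b B E : nat -> nat) (D Ec : nat).
Definition Nrad : nat := Nat.max (2 * D) (D + Ec).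
Definition delta_b (k' n' : nat) : nat := Nat.max 2 (b n') * (k' + 1) - 1.
Definition xi (k' : nat) : nat :=
  Nat.max (a (2 * (2 * D + Ec) * (k' + 1) - 1)) (E (2 * k' + 1) + 1).
Definition chi1 (k' : nat) : nat :=
  Nat.max (xi (4 * k' + 3)) (B (8 * (D + Ec) * (k' + 1) - 1)) + 1.
Definition nu (f : nat -> nat) (m : nat) : nat := delta_b (f m) (f m).
Definition nuhat (f : nat -> nat) (m : nat) : nat := nu f (chi1 m).
Definition wfun (g : nat -> nat) (Nn : nat) (m : nat) : nat :=
  Nat.max (g (24 * Nn * (m + 1) ^ 2)) (24 * Nn * (m + 1) ^ 2).
Definition Rnum (k : nat) : nat := 4 * Nrad ^ 4 * (k + 1) ^ 2.
Definition Psi (k : nat) (f : nat -> nat) : nat :=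
  chi1 (24 * Nrad * (Nat.iter (Rnum k) (wfun (nuhat f) Nrad) 0 + 1) ^ 2).
End Rate.

(* Main.v *)
Require Import Defs.
From Stdlib Require Import Reals Lra Lia Psatz Classical.
Open Scope R_scope.

Section Vec.
Variable X : HilbertSpace.

Lemma hinner_zero_l : forall y : X, hinner X (hzero X) y = 0.
Proof.
  intro y. assert (H := hinner_add_l X (hzero X) (hzero X) y).
  rewrite hadd_zero in H. lra.
Qed.

Lemma hinner_opp_l : forall x y : X, hinner X (hopp X x) y = - hinner X x y.
Proof.
  intros x y. assert (H := hinner_add_l X x (hopp X x) y).
  rewrite hadd_opp, hinner_zero_l in H. lra.
Qed.

Lemma hinner_sub_l : forall x y z : X, hinner X (hsub x y) z = hinner X x z - hinner X y z.
Proof. intros. unfold hsub. rewrite hinner_add_l, hinner_opp_l. ring. Qed.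

Lemma hinner_add_r : forall x y z : X, hinner X z (hadd X x y) = hinner X z x + hinner X z y.
Proof. intros. rewrite !(hinner_sym X z). apply hinner_add_l. Qed.
Lemma hinner_scal_r : forall a (x y : X), hinner X y (hscal X a x) = a * hinner X y x.
Proof. intros. rewrite !(hinner_sym X y). apply hinner_scal_l. Qed.
Lemma hinner_opp_r : forall x y : X, hinner X y (hopp X x) = - hinner X y x.
Proof. intros. rewrite !(hinner_sym X y). apply hinner_opp_l. Qed.
Lemma hinner_sub_r : forall x y z : X, hinner X z (hsub x y) = hinner X z x - hinner X z y.
Proof. intros. rewrite !(hinner_sym X z). apply hinner_sub_l. Qed.
Lemma hinner_zero_r : forall y : X, hinner X y (hzero X) = 0.
Proof. intros. rewrite hinner_sym. apply hinner_zero_l. Qed.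

Lemma vec_eq : forall u v : X, (forall z, hinner X u z = hinner X v z) -> u = v.
Proof.
  intros u v H.
  assert (Hd : hsub u v = hzero X).
  { apply hinner_def. rewrite hinner_sub_l, H. ring. }
  unfold hsub in Hd.
  rewrite <- (hadd_zero X u), <- (hadd_opp X v), hadd_assoc, (hadd_comm X u v),
    <- hadd_assoc, Hd, hadd_zero. reflexivity.
Qed.

Ltac vexp := repeat (rewrite ?hinner_add_l, ?hinner_scal_l, ?hinner_opp_l,
   ?hinner_zero_l, ?hinner_sub_l).
Ltac veq := apply vec_eq; intro; vexp; ring.

Lemma quad : forall r s (a b : X),
  hinner X (hadd X (hscal X r a) (hscal X s b)) (hadd X (hscal X r a) (hscal X s b))
  = r*r*hinner X a a + 2*r*s*hinner X a b + s*s*hinner X b b.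
Proof.
  intros. vexp. rewrite ?hinner_add_r, ?hinner_scal_r. rewrite (hinner_sym X b a). ring.
Qed.

Lemma hnorm_nonneg : forall u : X, 0 <= hnorm u.
Proof. intros; unfold hnorm; apply sqrt_pos. Qed.

Lemma hnorm_sq : forall u : X, hnorm u * hnorm u = hinner X u u.
Proof. intros; unfold hnorm; apply sqrt_sqrt, hinner_pos. Qed.

Lemma hnorm_le_sq : forall (u : X) r, 0 <= r -> hinner X u u <= r * r -> hnorm u <= r.
Proof.
  intros u r Hr H. unfold hnorm. rewrite <- (sqrt_square r) by exact Hr.
  apply sqrt_le_1_alt. exact H.
Qed.

Lemma cs : forall u v : X, hinner X u v <= hnorm u * hnorm v.
Proof.
  intros u v.
  assert (Hp := hinner_pos X v).
  destruct (Req_dec (hinner X v v) 0) as [H0|H0].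
  - apply hinner_def in H0. subst v. rewrite hinner_zero_r.
    apply Rmult_le_pos; apply hnorm_nonneg.
  - assert (Hvv : 0 < hinner X v v) by lra.
    set (c := hinner X u v / hinner X v v).
    assert (Hq := hinner_pos X (hadd X (hscal X 1 u) (hscal X (-c) v))).
    rewrite quad in Hq.
    assert (Hk : hinner X u v * hinner X u v <= hinner X u u * hinner X v v).
    { unfold c in Hq.
      assert (E1: 1 * 1 * hinner X u u + 2 * 1 * - (hinner X u v / hinner X v v) * hinner X u v +
       - (hinner X u v / hinner X v v) * - (hinner X u v / hinner X v v) * hinner X v v
       = hinner X u u - hinner X u v * hinner X u v / hinner X v v) by (field; lra).
      rewrite E1 in Hq.
      apply Rmult_le_compat_r with (r := hinner X v v) in Hq; [|lra].
      replace ((hinner X u u - hinner X u v * hinner X u v / hinner X v v) * hinner X v v)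
        with (hinner X u u * hinner X v v - hinner X u v * hinner X u v) in Hq by (field; lra).
      lra. }
    destruct (Rle_dec (hinner X u v) 0).
    + apply Rle_trans with 0; [lra|]. apply Rmult_le_pos; apply hnorm_nonneg.
    + unfold hnorm. rewrite <- sqrt_mult by apply hinner_pos.
      rewrite <- (sqrt_square (hinner X u v)) by lra.
      apply sqrt_le_1_alt. exact Hk.
Qed.

Lemma tri : forall u v : X, hnorm (hadd X u v) <= hnorm u + hnorm v.
Proof.
  intros u v. apply hnorm_le_sq.
  - pose proof (hnorm_nonneg u); pose proof (hnorm_nonneg v); lra.
  - replace (hadd X u v) with (hadd X (hscal X 1 u) (hscal X 1 v)) by veq.
    rewrite quad. pose proof (cs u v). rewrite <- (hnorm_sq u), <- (hnorm_sq v). nra.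
Qed.

Lemma hnorm_scal : forall r (u : X), hnorm (hscal X r u) = Rabs r * hnorm u.
Proof.
  intros r u. unfold hnorm.
  replace (hinner X (hscal X r u) (hscal X r u)) with (Rsqr r * hinner X u u)
    by (rewrite hinner_scal_l, hinner_scal_r; unfold Rsqr; ring).
  rewrite sqrt_mult_alt by apply Rle_0_sqr. rewrite sqrt_Rsqr_abs. reflexivity.
Qed.

Lemma hdist_sym : forall u v : X, hnorm (hsub u v) = hnorm (hsub v u).
Proof.
  intros. replace (hsub u v) with (hscal X (-1) (hsub v u)) by veq.
  rewrite hnorm_scal. replace (Rabs (-1)) with 1 by (rewrite Rabs_left; lra). ring.
Qed.

Lemma hdist_tri : forall u v w : X, hnorm (hsub u v) <= hnorm (hsub u w) + hnorm (hsub w v).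
Proof.
  intros. replace (hsub u v) with (hadd X (hsub u w) (hsub w v)) by veq. apply tri.
Qed.

End Vec.

Ltac vexp := repeat (rewrite ?hinner_add_l, ?hinner_scal_l, ?hinner_opp_l,
   ?hinner_zero_l, ?hinner_sub_l).
Ltac veq := apply vec_eq; intro; vexp; ring.
Ltac veqf := apply vec_eq; intro; vexp; field; repeat split; lra.

Lemma sub_zero (X : HilbertSpace) (u v : X) : hsub u v = hzero X -> u = v.
Proof.
  intro H. apply vec_eq. intro z.
  assert (H1 : hinner X (hsub u v) z = 0) by (rewrite H; apply hinner_zero_l).
  rewrite hinner_sub_l in H1. lra.
Qed.

Section Res.
Variables (X : HilbertSpace) (A : X -> X -> Prop) (J : R -> X -> X).
Hypothesis Hmon : monotone_op A.
Hypothesis HJ : is_resolvent A J.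

Lemma res_uniq : forall beta (w y y' : X), 0 < beta ->
  A y (hscal X (/beta) (hsub w y)) -> A y' (hscal X (/beta) (hsub w y')) -> y = y'.
Proof.
  intros beta w y y' Hb H1 H2.
  pose proof (Hmon _ _ _ _ H1 H2) as H.
  replace (hsub (hscal X (/beta) (hsub w y)) (hscal X (/beta) (hsub w y')))
    with (hscal X (- / beta) (hsub y y')) in H by veq.
  rewrite hinner_scal_r in H.
  pose proof (hinner_pos X (hsub y y')).
  assert (0 < / beta) by (apply Rinv_0_lt_compat; lra).
  assert (hinner X (hsub y y') (hsub y y') = 0) by nra.
  apply sub_zero, hinner_def. assumption.
Qed.

Lemma res_id : forall beta gamma (x : X), 0 < beta -> 0 < gamma ->
  J beta (hadd X (hscal X (beta/gamma) x) (hscal X (1 - beta/gamma) (J gamma x))) = J gamma x.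
Proof.
  intros beta gamma x Hb Hg.
  set (w := hadd X (hscal X (beta/gamma) x) (hscal X (1 - beta/gamma) (J gamma x))).
  apply (res_uniq beta w); auto.
  pose proof (HJ gamma x Hg) as H.
  replace (hscal X (/ beta) (hsub w (J gamma x))) with (hscal X (/ gamma) (hsub x (J gamma x)));
    [exact H|].
  unfold w. veqf.
Qed.

Lemma res_nonexp : forall beta (x1 x2 : X), 0 < beta ->
  hnorm (hsub (J beta x1) (J beta x2)) <= hnorm (hsub x1 x2).
Proof.
  intros beta x1 x2 Hb.
  pose proof (Hmon _ _ _ _ (HJ beta x1 Hb) (HJ beta x2 Hb)) as H.
  set (y1 := J beta x1) in *. set (y2 := J beta x2) in *.
  replace (hsub (hscal X (/ beta) (hsub x1 y1)) (hscal X (/ beta) (hsub x2 y2)))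
    with (hscal X (/ beta) (hsub (hsub x1 x2) (hsub y1 y2))) in H by veq.
  rewrite hinner_scal_r, hinner_sub_r in H.
  assert (0 < / beta) by (apply Rinv_0_lt_compat; lra).
  assert (H2 : hinner X (hsub y1 y2) (hsub y1 y2) <= hinner X (hsub y1 y2) (hsub x1 x2)) by nra.
  pose proof (cs X (hsub y1 y2) (hsub x1 x2)).
  rewrite <- hnorm_sq in H2.
  pose proof (hnorm_nonneg X (hsub y1 y2)). pose proof (hnorm_nonneg X (hsub x1 x2)).
  nra.
Qed.

Lemma res_fix : forall beta (p : X), 0 < beta -> A p (hzero X) -> J beta p = p.
Proof.
  intros beta p Hb Hp. apply (res_uniq beta p); auto.
  replace (hscal X (/ beta) (hsub p p)) with (hzero X) by veq. exact Hp.
Qed.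

Lemma res_J1 : forall beta (x : X), 0 < beta ->
  hnorm (hsub (J 1 (J beta x)) (J beta x)) <= / beta * hnorm (hsub x (J beta x)).
Proof.
  intros beta x Hb.
  pose proof (res_id 1 beta x ltac:(lra) Hb) as Hid.
  set (y := J beta x) in *.
  set (w := hadd X (hscal X (1 / beta) x) (hscal X (1 - 1 / beta) y)) in *.
  rewrite <- Hid at 2.
  eapply Rle_trans; [apply res_nonexp; lra|].
  replace (hsub y w) with (hscal X (/ beta) (hsub y x)) by (unfold w; veqf).
  rewrite hnorm_scal, hdist_sym. rewrite Rabs_right; [lra|].
  left; apply Rinv_0_lt_compat; lra.
Qed.

Lemma res_cmp : forall beta (z : X), 0 < beta ->
  hnorm (hsub (J beta z) z) <= Rmax 2 beta * hnorm (hsub (J 1 z) z).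
Proof.
  intros beta z Hb.
  pose proof (hnorm_nonneg X (hsub (J 1 z) z)) as Hn.
  destruct (Rle_dec 1 beta) as [H1|H1].
  - pose proof (res_id 1 beta z ltac:(lra) Hb) as Hid.
    set (y := J beta z) in *.
    set (w := hadd X (hscal X (1 / beta) z) (hscal X (1 - 1 / beta) y)) in *.
    assert (Hyz : hnorm (hsub y (J 1 z)) <= (1 - 1/beta) * hnorm (hsub y z)).
    { rewrite <- Hid at 1. eapply Rle_trans; [apply res_nonexp; lra|].
      replace (hsub w z) with (hscal X (1 - 1/beta) (hsub y z)) by (unfold w; veqf).
      rewrite hnorm_scal, Rabs_right; [lra|].
      assert (1/beta <= 1) by (apply Rmult_le_reg_r with beta; [lra|]; field_simplify; lra).
      lra. }
    pose proof (hdist_tri X y z (J 1 z)).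
    assert (Hm : beta <= Rmax 2 beta) by apply Rmax_r.
    assert (Hk : 1/beta * hnorm (hsub y z) <= hnorm (hsub (J 1 z) z)) by lra.
    apply Rle_trans with (beta * hnorm (hsub (J 1 z) z)).
    + apply Rmult_le_reg_l with (1/beta). apply Rdiv_lt_0_compat; lra.
      replace (1 / beta * (beta * hnorm (hsub (J 1 z) z))) with (hnorm (hsub (J 1 z) z))
        by (field; lra). lra.
    + apply Rmult_le_compat_r; lra.
  - pose proof (res_id beta 1 z Hb ltac:(lra)) as Hid.
    set (w := hadd X (hscal X (beta / 1) z) (hscal X (1 - beta / 1) (J 1 z))) in *.
    assert (Hyz : hnorm (hsub (J beta z) (J 1 z)) <= (1 - beta) * hnorm (hsub (J 1 z) z)).
    { rewrite <- Hid at 1. eapply Rle_trans; [apply res_nonexp; lra|].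
      replace (hsub z w) with (hscal X (1 - beta) (hsub z (J 1 z))) by (unfold w; veqf).
      rewrite hnorm_scal, (hdist_sym X z), Rabs_right; lra. }
    pose proof (hdist_tri X (J beta z) z (J 1 z)).
    assert (Hm : 2 <= Rmax 2 beta) by apply Rmax_l.
    apply Rle_trans with (2 * hnorm (hsub (J 1 z) z)); [nra|].
    apply Rmult_le_compat_r; lra.
Qed.

End Res.


Lemma convex_fix (X : HilbertSpace) (T : X -> X)
  (HT : forall x y, hnorm (hsub (T x) (T y)) <= hnorm (hsub x y))
  (u v : X) (t d L : R) :
  0 <= t <= 1 -> 0 <= d -> hnorm (hsub (T u) u) <= d -> hnorm (hsub (T v) v) <= d ->
  hnorm (hsub u v) <= L ->
  hnorm (hsub (T (hadd X u (hscal X t (hsub v u)))) (hadd X u (hscal X t (hsub v u))))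
  * hnorm (hsub (T (hadd X u (hscal X t (hsub v u)))) (hadd X u (hscal X t (hsub v u))))
  <= d * d + 4 * t * (1 - t) * d * L.
Proof.
  intros Ht Hd Hu Hv HL.
  set (w := hadd X u (hscal X t (hsub v u))).
  set (a := hsub u (T w)). set (b := hsub v (T w)).
  rewrite hdist_sym, hnorm_sq.
  replace (hsub w (T w)) with (hadd X (hscal X (1-t) a) (hscal X t b)) by (unfold a, b, w; veq).
  rewrite quad.
  assert (El : hinner X (hsub u v) (hsub u v) = 1*1*hinner X a a + 2*1*(-1)*hinner X a b + (-1)*(-1)*hinner X b b).
  { rewrite <- quad. f_equal; unfold a, b; veq. }
  set (l := hnorm (hsub u v)).
  assert (Hl2 : l * l = hinner X (hsub u v) (hsub u v)) by apply hnorm_sq.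
  assert (Hl0 : 0 <= l) by apply hnorm_nonneg.
  assert (Ha : hnorm a <= d + t * l).
  { unfold a. eapply Rle_trans; [apply (hdist_tri X u (T w) (T u))|].
    rewrite (hdist_sym X u (T u)).
    assert (hnorm (hsub (T u) (T w)) <= t * l).
    { eapply Rle_trans; [apply HT|].
      replace (hsub u w) with (hscal X (-t) (hsub v u)) by (unfold w; veq).
      rewrite hnorm_scal, (hdist_sym X v u). fold l. rewrite Rabs_left1; lra. }
    lra. }
  assert (Hb : hnorm b <= d + (1 - t) * l).
  { unfold b. eapply Rle_trans; [apply (hdist_tri X v (T w) (T v))|].
    rewrite (hdist_sym X v (T v)).
    assert (hnorm (hsub (T v) (T w)) <= (1 - t) * l).
    { eapply Rle_trans; [apply HT|].
      replace (hsub v w) with (hscal X (1 - t) (hsub v u)) by (unfold w; veq).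
      rewrite hnorm_scal, (hdist_sym X v u). fold l. rewrite Rabs_right; lra. }
    lra. }
  pose proof (hnorm_nonneg X a). pose proof (hnorm_nonneg X b).
  assert (Haa : hinner X a a <= (d + t*l) * (d + t*l)) by (rewrite <- (hnorm_sq X a); apply Rmult_le_compat; lra).
  assert (Hbb : hinner X b b <= (d + (1-t)*l) * (d + (1-t)*l)) by (rewrite <- (hnorm_sq X b); apply Rmult_le_compat; lra).
  assert (E2 : (1 - t) * (1 - t) * hinner X a a + 2 * (1 - t) * t * hinner X a b + t * t * hinner X b b
     = (1-t) * hinner X a a + t * hinner X b b - t * (1-t) * (l*l)).
  { rewrite Hl2, El. ring. }
  rewrite E2.
  assert (H1 : (1-t) * hinner X a a <= (1-t) * ((d + t*l) * (d + t*l))) by (apply Rmult_le_compat_l; lra).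
  assert (H2 : t * hinner X b b <= t * ((d + (1-t)*l) * (d + (1-t)*l))) by (apply Rmult_le_compat_l; lra).
  assert (H3 : 4 * t * (1 - t) * d * l <= 4 * t * (1 - t) * d * L).
  { apply Rmult_le_compat_l; [|unfold l; lra]. assert (0 <= t * (1-t)) by nra. apply Rmult_le_pos; [|lra]. lra. }
  assert (E3 : (1-t) * ((d + t*l) * (d + t*l)) + t * ((d + (1-t)*l) * (d + (1-t)*l)) - t*(1-t)*(l*l)
     = d*d + 4*t*(1-t)*d*l) by ring.
  lra.
Qed.

Lemma decrease (X : HilbertSpace) (x0 z y : X) (t : R) :
  hinner X (hsub x0 (hadd X z (hscal X t (hsub y z)))) (hsub x0 (hadd X z (hscal X t (hsub y z))))
  = hinner X (hsub x0 z) (hsub x0 z) - 2 * t * hinner X (hsub x0 z) (hsub y z)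
    + t * t * hinner X (hsub y z) (hsub y z).
Proof.
  replace (hsub x0 (hadd X z (hscal X t (hsub y z)))) with
    (hadd X (hscal X 1 (hsub x0 z)) (hscal X (-t) (hsub y z))) by veq.
  rewrite quad. ring.
Qed.

Lemma sum_from_nonneg (g : nat -> R) : (forall i, 0 <= g i) -> forall s n, 0 <= sum_from g s n.
Proof. intros Hg s n. revert s. induction n; intro s; simpl; [lra|]. specialize (IHn (S s)). specialize (Hg s). lra. Qed.

Lemma sum_from_split (g : nat -> R) : forall n m s,
  sum_from g s (n + m) = sum_from g s n + sum_from g (s + n) m.
Proof.
  induction n; intros m s; simpl.
  - rewrite Nat.add_0_r. ring.
  - rewrite IHn. replace (S s + n)%nat with (s + S n)%nat by lia. ring.
Qed.

Lemma sum_from_term (g : nat -> R) : (forall i, 0 <= g i) ->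
  forall s j, (s <= j)%nat -> g j <= sum_from g s (S (j - s)).
Proof.
  intros Hg.
  assert (K : forall d s, g (s + d)%nat <= sum_from g s (S d)).
  { induction d; intro s; simpl.
    - rewrite Nat.add_0_r. lra.
    - specialize (IHd (S s)). simpl in IHd. replace (s + S d)%nat with (S s + d)%nat by lia.
      pose proof (Hg s). simpl. lra. }
  intros s j Hsj. replace j with (s + (j - s))%nat at 1 by lia. apply K.
Qed.


Lemma INR_pred1 (P : nat) : (1 <= P)%nat -> INR (P - 1) + 1 = INR P.
Proof. intro H. rewrite minus_INR by exact H. simpl. ring. Qed.

Lemma frac_le (M a c : R) : 0 < a -> 0 < c -> M * c <= a -> M * (1 / a) <= 1 / c.
Proof.
  intros Ha Hc H. apply Rmult_le_reg_r with (a * c). nra.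
  replace (M * (1 / a) * (a * c)) with (M * c) by (field; lra).
  replace (1 / c * (a * c)) with a by (field; lra). exact H.
Qed.

Lemma inv_le (a c : R) : 0 < c -> c <= a -> 1 / a <= 1 / c.
Proof. intros Hc H. apply Rmult_le_reg_r with (a * c). nra.
  replace (1 / a * (a * c)) with c by (field; lra).
  replace (1 / c * (a * c)) with a by (field; lra). exact H. Qed.

Lemma iter_mono (g : nat -> nat) : (forall m, (m <= g m)%nat) ->
  forall i j, (i <= j)%nat -> (Nat.iter i g 0 <= Nat.iter j g 0)%nat.
Proof.
  intros Hg i j Hij. induction Hij; [lia|]. simpl. specialize (Hg (Nat.iter m g 0%nat)). lia.
Qed.

Section Main.
Variables (X : HilbertSpace) (A : X -> X -> Prop) (J : R -> X -> X)
  (alpha beta : nat -> R) (e : nat -> X) (x0 p : X)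
  (a b B E : nat -> nat) (D Ec : nat).
Hypothesis Hmm : maximal_monotone A.
Hypothesis HJ : is_resolvent A J.
Hypothesis Hp : A p (hzero X).
Hypothesis Hal : forall n, 0 < alpha n < 1.
Hypothesis Hbe : forall n, 0 < beta n.
Hypothesis Ha : monotone_nat a.
Hypothesis Hb : monotone_nat b.
Hypothesis HB : monotone_nat B.
Hypothesis HE : monotone_nat E.
Hypothesis Q1 : forall k n, (a k <= n)%nat -> alpha n <= 1 / (INR k + 1).
Hypothesis Q3' : forall n, beta n <= INR (b n).
Hypothesis Q3 : forall k n, (B k <= n)%nat -> INR k <= beta n.
Hypothesis Q4 : forall k n, sum_from (fun i => hnorm (e i)) (E k + 1)%nat n <= 1 / (INR k + 1).
Hypothesis HEc : 1 + sum_from (fun i => hnorm (e i)) 0%nat (E 0%nat + 1)%nat <= INR Ec.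
Hypothesis HD : hnorm (hsub x0 p) <= INR D.

Let g := fun i => hnorm (e i).
Let x := hppa J alpha beta e x0.
Let Nr := INR (Nrad D Ec).
Let Hmon : monotone_op A := proj1 Hmm.

Lemma g_nonneg : forall i, 0 <= g i.
Proof. intro; apply hnorm_nonneg. Qed.

Lemma Ec_ge1 : (1 <= Ec)%nat.
Proof.
  pose proof (sum_from_nonneg g g_nonneg 0 (E 0 + 1)).
  assert (1 <= INR Ec) by (unfold g in *; lra).
  destruct Ec; [simpl in *; lra| lia].
Qed.

Lemma Nr_props : 1 <= Nr /\ 2 * INR D <= Nr /\ INR D + INR Ec <= Nr.
Proof.
  pose proof Ec_ge1. unfold Nr, Nrad.
  assert (H1 : (2 * D <= Nat.max (2*D) (D+Ec))%nat) by lia.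
  assert (H2 : (D + Ec <= Nat.max (2*D) (D+Ec))%nat) by lia.
  apply le_INR in H1. apply le_INR in H2. rewrite mult_INR in H1. rewrite plus_INR in H2.
  assert (INR 1 <= INR Ec) by (apply le_INR; lia). simpl in *.
  pose proof (pos_INR D). lra.
Qed.

Lemma sum_le_Ec : forall n, sum_from g 0 n <= INR Ec.
Proof.
  intro n.
  assert (H := sum_from_split g (E 0 + 1) n 0).
  assert (H2 : sum_from g 0 n <= sum_from g 0 (E 0 + 1 + n)).
  { replace (E 0 + 1 + n)%nat with (n + (E 0 + 1))%nat by lia.
    rewrite sum_from_split. pose proof (sum_from_nonneg g g_nonneg (0 + n) (E 0 + 1)). lra. }
  specialize (Q4 0 n). simpl in H, Q4. fold g in Q4, HEc. simpl in HEc.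
  replace (1 / (0 + 1)) with 1 in Q4 by field. lra.
Qed.

Lemma Jp : forall bt, 0 < bt -> J bt p = p.
Proof. intros. apply (res_fix X A J Hmon HJ); auto. Qed.

Lemma x_bound : forall n, hnorm (hsub (x n) p) <= INR D + INR Ec.
Proof.
  assert (K : forall n, hnorm (hsub (x n) p) <= hnorm (hsub x0 p) + sum_from g 0 n).
  { induction n.
    - unfold x; simpl. lra.
    - assert (Hs : sum_from g 0 (S n) = sum_from g 0 n + g n).
      { replace (S n) with (n + 1)%nat by lia. rewrite sum_from_split. simpl. ring. }
      rewrite Hs. unfold x. simpl. fold x.
      replace (hsub (hadd X (hscal X (alpha n) x0) (hscal X (1 - alpha n) (hadd X (J (beta n) (x n)) (e n)))) p)
        with (hadd X (hscal X (alpha n) (hsub x0 p)) (hscal X (1 - alpha n) (hadd X (hsub (J (beta n) (x n)) p) (e n)))) by veq.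
      eapply Rle_trans; [apply tri|]. rewrite !hnorm_scal.
      pose proof (Hal n).
      rewrite (Rabs_right (alpha n)) by lra. rewrite (Rabs_right (1 - alpha n)) by lra.
      pose proof (tri X (hsub (J (beta n) (x n)) p) (e n)).
      pose proof (res_nonexp X A J Hmon HJ (beta n) (x n) p (Hbe n)) as Hne.
      rewrite Jp in Hne by apply Hbe.
      pose proof (sum_from_nonneg g g_nonneg 0 n). pose proof (g_nonneg n). unfold g in *.
      pose proof (hnorm_nonneg X (hsub x0 p)).
      assert (Hq : hnorm (hadd X (hsub (J (beta n) (x n)) p) (e n)) <= hnorm (hsub x0 p) + sum_from (fun i => hnorm (e i)) 0 n + hnorm (e n)) by lra.
      assert (alpha n * hnorm (hsub x0 p) <= alpha n * (hnorm (hsub x0 p) + sum_from (fun i => hnorm (e i)) 0 n + hnorm (e n))) by (apply Rmult_le_compat_l; lra).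
      assert ((1 - alpha n) * hnorm (hadd X (hsub (J (beta n) (x n)) p) (e n)) <= (1 - alpha n) * (hnorm (hsub x0 p) + sum_from (fun i => hnorm (e i)) 0 n + hnorm (e n)))
        by (apply Rmult_le_compat_l; lra).
      lra. }
  intro n. specialize (K n). pose proof (sum_le_Ec n). lra.
Qed.


Lemma step_est : forall k' i',
  (Nat.max (xi a E D Ec (4*k'+3)) (B (8*(D+Ec)*(k'+1)-1)) <= i')%nat ->
  hnorm (hsub (J 1 (x (S i'))) (x (S i'))) <= 1 / (INR k' + 1).
Proof.
  intros k' i' Hi. unfold xi in Hi.
  pose proof Ec_ge1 as HEc1.
  assert (HK : 0 <= INR k') by apply pos_INR.
  assert (HDr : 0 <= INR D) by apply pos_INR.
  assert (HEr : 1 <= INR Ec) by (replace 1 with (INR 1) by reflexivity; apply le_INR; lia).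
  set (y := J (beta i') (x i')).
  pose proof (x_bound i') as Hxi.
  assert (Hy : hnorm (hsub y p) <= INR D + INR Ec).
  { pose proof (res_nonexp X A J Hmon HJ (beta i') (x i') p (Hbe i')) as Hne.
    rewrite Jp in Hne by apply Hbe. fold y in Hne. lra. }
  assert (Ha1 : alpha i' * (2 * INR D + INR Ec) <= 1 / (8 * (INR k' + 1))).
  { assert (H := Q1 (2*(2*D+Ec)*(4*k'+3+1)-1) i' ltac:(lia)).
    rewrite INR_pred1 in H by nia.
    repeat rewrite ?mult_INR, ?plus_INR in H. cbn [INR] in H.
    pose proof (Hal i').
    apply Rmult_le_compat_r with (r := 2 * INR D + INR Ec) in H; [|lra].
    eapply Rle_trans; [exact H|]. right. field. lra. }
  assert (He1 : g i' <= 1 / (8 * (INR k' + 1))).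
  { assert (H := sum_from_term g g_nonneg (E (2*(4*k'+3)+1) + 1) i' ltac:(lia)).
    assert (H2 := Q4 (2*(4*k'+3)+1) (S (i' - (E (2 * (4 * k' + 3) + 1) + 1)))).
    fold g in H2. repeat rewrite ?plus_INR, ?mult_INR in H2. cbn [INR] in H2.
    eapply Rle_trans; [exact H|]. eapply Rle_trans; [exact H2|]. right. field. lra. }
  assert (Hxy : hnorm (hsub (x (S i')) y) <= 1 / (4 * (INR k' + 1))).
  { unfold x at 1. simpl. fold x. fold y.
    replace (hsub (hadd X (hscal X (alpha i') x0) (hscal X (1 - alpha i') (hadd X y (e i')))) y)
      with (hadd X (hscal X (alpha i') (hsub x0 y)) (hscal X (1 - alpha i') (e i'))) by veq.
    eapply Rle_trans; [apply tri|]. rewrite !hnorm_scal.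
    pose proof (Hal i').
    rewrite (Rabs_right (alpha i')) by lra. rewrite (Rabs_right (1 - alpha i')) by lra.
    pose proof (hdist_tri X x0 y p). rewrite (hdist_sym X p y) in H0.
    assert (hnorm (hsub x0 y) <= 2 * INR D + INR Ec) by lra.
    assert (alpha i' * hnorm (hsub x0 y) <= alpha i' * (2 * INR D + INR Ec)) by (apply Rmult_le_compat_l; lra).
    pose proof (g_nonneg i'). unfold g in *.
    assert ((1 - alpha i') * hnorm (e i') <= hnorm (e i')).
    { assert (0 <= alpha i' * hnorm (e i')) by (apply Rmult_le_pos; lra). lra. }
    assert (1 / (8 * (INR k' + 1)) + 1 / (8 * (INR k' + 1)) = 1 / (4 * (INR k' + 1))) by (field; lra).
    lra. }
  assert (HJy : hnorm (hsub (J 1 y) y) <= 1 / (2 * (INR k' + 1))).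
  { pose proof (res_J1 X A J Hmon HJ (beta i') (x i') (Hbe i')) as H. fold y in H.
    assert (Hb1 := Q3 (8*(D+Ec)*(k'+1)-1) i' ltac:(lia)).
    rewrite minus_INR in Hb1 by nia. repeat rewrite ?mult_INR, ?plus_INR in Hb1. cbn [INR] in Hb1.
    assert (Hbig : 4 * (INR D + INR Ec) * (INR k' + 1) <= beta i') by nra.
    pose proof (hdist_tri X (x i') y p). rewrite (hdist_sym X p y) in H0.
    assert (Hd : hnorm (hsub (x i') y) <= 2 * (INR D + INR Ec)) by lra.
    pose proof (Hbe i').
    assert (0 < / beta i') by (apply Rinv_0_lt_compat; lra).
    assert (/ beta i' * hnorm (hsub (x i') y) <= / beta i' * (2 * (INR D + INR Ec)))
      by (apply Rmult_le_compat_l; lra).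
    assert (/ beta i' * (2 * (INR D + INR Ec)) <= 1 / (2 * (INR k' + 1))).
    { apply Rmult_le_reg_l with (beta i'); [lra|].
      replace (beta i' * (/ beta i' * (2 * (INR D + INR Ec)))) with (2 * (INR D + INR Ec)) by (field; lra).
      replace (beta i' * (1 / (2 * (INR k' + 1)))) with (beta i' / (2 * (INR k' + 1))) by (field; lra).
      apply Rmult_le_reg_r with (2 * (INR k' + 1)); [lra|].
      replace (beta i' / (2 * (INR k' + 1)) * (2 * (INR k' + 1))) with (beta i') by (field; lra).
      nra. }
    lra. }
  pose proof (hdist_tri X (J 1 (x (S i'))) (x (S i')) (J 1 y)).
  pose proof (hdist_tri X (J 1 y) (x (S i')) y).
  pose proof (res_nonexp X A J Hmon HJ 1 (x (S i')) y ltac:(lra)).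
  rewrite (hdist_sym X y (x (S i'))) in H0.
  assert (1 / (4 * (INR k' + 1)) + 1 / (4 * (INR k' + 1)) + 1 / (2 * (INR k' + 1)) + 1 / (4 * (INR k' + 1)) <= 1 / (INR k' + 1) + 1 / (4 * (INR k' + 1))).
  { right. field. lra. }
  assert (0 < 1 / (4 * (INR k' + 1))) by (apply Rdiv_lt_0_compat; lra).
  lra.
Qed.


Lemma chi1_mono : forall k1 k2, (k1 <= k2)%nat -> (chi1 a B E D Ec k1 <= chi1 a B E D Ec k2)%nat.
Proof.
  intros k1 k2 H. unfold chi1, xi.
  assert (a (2*(2*D+Ec)*(4*k1+3+1)-1) <= a (2*(2*D+Ec)*(4*k2+3+1)-1))%nat
    by (apply Ha; apply Nat.sub_le_mono_r; apply Nat.mul_le_mono_l; lia).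
  assert (E (2*(4*k1+3)+1) <= E (2*(4*k2+3)+1))%nat by (apply HE; lia).
  assert (B (8*(D+Ec)*(k1+1)-1) <= B (8*(D+Ec)*(k2+1)-1))%nat
    by (apply HB; apply Nat.sub_le_mono_r; apply Nat.mul_le_mono_l; lia).
  lia.
Qed.

Definition Wf (f : nat -> nat) := wfun (nuhat a b B E D Ec f) (Nrad D Ec).
Definition mlev (f : nat -> nat) (j : nat) := Nat.iter j (Wf f) 0%nat.
Definition eps (k : nat) := 1 / (INR k + 1).
Definition tt (k : nat) := eps k / (4 * Nr * Nr).

Definition TheGoal (k : nat) (f : nat -> nat) : Prop :=
  exists n : nat, (n <= Psi a b B E D Ec k f)%nat /\
    exists x : X, hnorm (hsub x p) <= INR (Nrad D Ec) /\
      forall i : nat, (n <= i <= f n)%nat ->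
        hnorm (hsub (J (beta i) x) x) <= 1 / (INR (f n) + 1) /\
        hinner X (hsub x0 x) (hsub (hppa J alpha beta e x0 i) x) <= 1 / (INR k + 1).

Definition Inv (k : nat) (f : nat -> nat) (j : nat) : Prop :=
  exists z : X, hnorm (hsub z p) <= Nr /\
    hinner X (hsub x0 z) (hsub x0 z) + INR j * (tt k * eps k) <= INR D * INR D /\
    hnorm (hsub (J 1 z) z) <= 1 / (INR (mlev f (Rnum D Ec k - j)) + 1).

Lemma Nrad_ge1 : (1 <= Nrad D Ec)%nat.
Proof. pose proof Ec_ge1. unfold Nrad. lia. Qed.

Lemma Wf_infl : forall f m, (m <= Wf f m)%nat.
Proof. intros f m. pose proof Nrad_ge1. unfold Wf, wfun. rewrite Nat.pow_2_r. assert (m <= 24 * Nrad D Ec * ((m + 1) * (m + 1)))%nat by nia. lia. Qed.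

Lemma sq_le (h c : R) : 0 <= h -> 0 <= c -> h * h <= c * c -> h <= c.
Proof. intros. nra. Qed.

Lemma step : forall k f j, monotone_nat f -> (j < Rnum D Ec k)%nat -> Inv k f j ->
  TheGoal k f \/ Inv k f (S j).
Proof.
  intros k f j Hf Hj [z [Hz1 [Hz2 Hz3]]].
  destruct Nr_props as [HN1 [HN2 HN3]].
  assert (HDr : 0 <= INR D) by apply pos_INR.
  set (q := mlev f (Rnum D Ec k - S j)).
  assert (HQ : mlev f (Rnum D Ec k - j) = Wf f q).
  { unfold q. replace (Rnum D Ec k - j)%nat with (S (Rnum D Ec k - S j)) by lia. reflexivity. }
  rewrite HQ in Hz3.
  set (k' := (24 * Nrad D Ec * (q+1)^2)%nat).
  set (n := chi1 a B E D Ec k').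
  assert (Hk'R : INR k' = 24 * Nr * ((INR q + 1) * (INR q + 1))).
  { unfold k'. rewrite !mult_INR, pow_INR, plus_INR. simpl. fold Nr. ring. }
  assert (HWk : (k' <= Wf f q)%nat) by (unfold Wf, wfun; fold k'; lia).
  assert (HWnu : (nuhat a b B E D Ec f k' <= Wf f q)%nat) by (unfold Wf, wfun; fold k'; lia).
  assert (HnPsi : (n <= Psi a b B E D Ec k f)%nat).
  { unfold Psi. apply chi1_mono.
    change (Nat.iter (Rnum D Ec k) (wfun (nuhat a b B E D Ec f) (Nrad D Ec)) 0%nat) with (mlev f (Rnum D Ec k)).
    assert (q <= mlev f (Rnum D Ec k))%nat.
    { unfold q, mlev. apply iter_mono; [apply Wf_infl| lia]. }
    unfold k'. apply Nat.mul_le_mono_l. apply Nat.pow_le_mono_l. lia. }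
  destruct (classic (forall i, (n <= i <= f n)%nat ->
      hinner X (hsub x0 z) (hsub (x i) z) <= eps k)) as [Hall|Hex].
  - left. exists n. split; [exact HnPsi|]. exists z. split; [exact Hz1|].
    intros i Hi. split; [|apply Hall; exact Hi].
    pose proof (res_cmp X A J Hmon HJ (beta i) z (Hbe i)) as Hc.
    set (M := INR (Nat.max 2 (b (f n)))).
    assert (HbM : beta i <= M).
    { eapply Rle_trans; [apply Q3'|]. apply le_INR. assert (b i <= b (f n))%nat by (apply Hb; lia). lia. }
    assert (H2M : 2 <= M) by (unfold M; replace 2 with (INR 2) by (simpl; ring); apply le_INR; lia).
    assert (HRM : Rmax 2 (beta i) <= M) by (unfold Rmax; destruct Rle_dec; lra).
    assert (HMc : M * (INR (f n) + 1) <= INR (Wf f q) + 1).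
    { assert (Hn : (Nat.max 2 (b (f n)) * (f n + 1) <= Wf f q + 1)%nat).
      { unfold nuhat, nu, delta_b in HWnu. fold n in HWnu. lia. }
      apply le_INR in Hn. rewrite mult_INR, !plus_INR in Hn. change (INR 1) with 1 in Hn. unfold M. lra. }
    pose proof (hnorm_nonneg X (hsub (J 1 z) z)).
    assert (Hr : Rmax 2 (beta i) * hnorm (hsub (J 1 z) z) <= M * (1 / (INR (Wf f q) + 1))).
    { apply Rmult_le_compat; auto. pose proof (Rmax_l 2 (beta i)). lra. }
    pose proof (pos_INR (Wf f q)). pose proof (pos_INR (f n)).
    pose proof (frac_le M (INR (Wf f q) + 1) (INR (f n) + 1) ltac:(lra) ltac:(lra) HMc).
    lra.
  - right. apply not_all_ex_not in Hex. destruct Hex as [i Hi].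
    apply imply_to_and in Hi. destruct Hi as [Hin Hgt]. apply Rnot_le_lt in Hgt.
    destruct i as [|i']. { unfold n, chi1 in Hin. lia. }
    assert (Hst := step_est k' i' ltac:(unfold n, chi1 in Hin; lia)).
    set (xi := x (S i')) in *.
    assert (Hxp : hnorm (hsub xi p) <= Nr) by (pose proof (x_bound (S i')); fold xi in H; lra).
    assert (Hzx : hnorm (hsub z xi) <= 2 * Nr).
    { pose proof (hdist_tri X z xi p). rewrite (hdist_sym X p xi) in H. lra. }
    assert (Hek : 0 < eps k <= 1).
    { unfold eps. pose proof (pos_INR k). split. apply Rdiv_lt_0_compat; lra.
      apply Rmult_le_reg_r with (INR k + 1); [lra|]. replace (1 / (INR k + 1) * (INR k + 1)) with 1 by (field; lra). lra. }
    assert (Ht : 0 < tt k <= 1).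
    { unfold tt. split. apply Rdiv_lt_0_compat; nra.
      apply Rmult_le_reg_r with (4 * Nr * Nr); [nra|].
      replace (eps k / (4 * Nr * Nr) * (4 * Nr * Nr)) with (eps k) by (field; lra). nra. }
    assert (Htt : tt k * (4 * Nr * Nr) = eps k) by (unfold tt; field; lra).
    set (t := tt k) in *.
    exists (hadd X z (hscal X t (hsub xi z))).
    assert (Hdec : hinner X (hsub x0 (hadd X z (hscal X t (hsub xi z)))) (hsub x0 (hadd X z (hscal X t (hsub xi z))))
       + INR (S j) * (t * eps k) <= INR D * INR D).
    { rewrite decrease. rewrite S_INR.
      assert (HL : hinner X (hsub xi z) (hsub xi z) <= 4 * Nr * Nr).
      { rewrite <- hnorm_sq. rewrite hdist_sym. pose proof (hnorm_nonneg X (hsub z xi)). nra. }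
      assert (t * t * hinner X (hsub xi z) (hsub xi z) <= t * t * (4 * Nr * Nr))
        by (apply Rmult_le_compat_l; nra).
      assert (2 * t * eps k <= 2 * t * hinner X (hsub x0 z) (hsub xi z)) by (apply Rmult_le_compat_l; lra).
      assert (t * t * (4 * Nr * Nr) = t * eps k) by (rewrite <- Htt; ring).
      lra. }
    split; [|split; [exact Hdec|]].
    + assert (Hn0 : hnorm (hsub x0 (hadd X z (hscal X t (hsub xi z)))) <= INR D).
      { apply hnorm_le_sq; [lra|]. pose proof (pos_INR (S j)).
        assert (0 <= INR (S j) * (t * eps k)) by (apply Rmult_le_pos; nra). lra. }
      pose proof (hdist_tri X (hadd X z (hscal X t (hsub xi z))) p x0).
      rewrite hdist_sym in Hn0. lra.
    + fold q.
      set (d := 1 / INR k').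
      assert (Hk'pos : 0 < INR k').
      { rewrite Hk'R. pose proof (pos_INR q). nra. }
      assert (Hd1 : hnorm (hsub (J 1 z) z) <= d).
      { eapply Rle_trans; [exact Hz3|]. apply inv_le; [lra|].
        apply le_INR in HWk. lra. }
      assert (Hd2 : hnorm (hsub (J 1 xi) xi) <= d).
      { eapply Rle_trans; [exact Hst|]. apply inv_le; lra. }
      assert (Hd0 : 0 <= d) by (unfold d; left; apply Rdiv_lt_0_compat; lra).
      pose proof (convex_fix X (J 1) (fun u v => res_nonexp X A J Hmon HJ 1 u v ltac:(lra))
         z xi t d (2 * Nr) ltac:(lra) Hd0 Hd1 Hd2 Hzx) as Hcv.
      set (h := hnorm (hsub (J 1 (hadd X z (hscal X t (hsub xi z)))) (hadd X z (hscal X t (hsub xi z))))) in *.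
      set (Qr := INR q + 1).
      assert (HQr : 1 <= Qr) by (unfold Qr; pose proof (pos_INR q); lra).
      assert (Hde : d = 1 / (24 * Nr * (Qr * Qr))) by (unfold d, Qr; rewrite Hk'R; reflexivity).
      assert (H4 : 4 * t * (1 - t) * d * (2 * Nr) <= 2 * Nr * d).
      { assert (4 * t * (1 - t) <= 1) by nra. assert (0 <= 2 * Nr * d) by nra. nra. }
      assert (Hdn : d <= Nr).
      { rewrite Hde. apply Rmult_le_reg_r with (24 * Nr * (Qr * Qr)). nra.
        replace (1 / (24 * Nr * (Qr * Qr)) * (24 * Nr * (Qr * Qr))) with 1 by (field; split; apply Rgt_not_eq; lra).
        assert (1 <= (Nr*Nr)*(Qr*Qr)) by (apply Rle_trans with (1*1); [lra| apply Rmult_le_compat; nra]).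
        nra. }
      assert (H5 : d * d <= Nr * d) by nra.
      assert (H6 : 3 * Nr * d = 1 / (8 * (Qr * Qr))) by (rewrite Hde; field; split; apply Rgt_not_eq; lra).
      assert (H7 : 1 / (8 * (Qr * Qr)) <= (1 / Qr) * (1 / Qr)).
      { replace ((1 / Qr) * (1 / Qr)) with (1 / (Qr * Qr)) by (field; lra).
        apply inv_le; nra. }
      apply sq_le. apply hnorm_nonneg. left; apply Rdiv_lt_0_compat; lra.
      fold h. lra.
Qed.


Lemma inv0 : forall k f, Inv k f 0.
Proof.
  intros k f. exists p.
  assert (Hpp : hnorm (hsub p p) = 0).
  { replace (hsub p p) with (hzero X) by veq. unfold hnorm. rewrite hinner_zero_l. apply sqrt_0. }
  destruct Nr_props as [HN1 [HN2 HN3]].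
  split; [lra|]. split.
  - simpl. rewrite <- hnorm_sq. pose proof (hnorm_nonneg X (hsub x0 p)).
    assert (hnorm (hsub x0 p) * hnorm (hsub x0 p) <= INR D * INR D) by (apply Rmult_le_compat; lra).
    lra.
  - rewrite Jp by lra. rewrite Hpp. left. apply Rdiv_lt_0_compat; [lra|].
    pose proof (pos_INR (mlev f (Rnum D Ec k - 0))). lra.
Qed.

Lemma all_j : forall k f, monotone_nat f ->
  forall j, (j <= Rnum D Ec k)%nat -> TheGoal k f \/ Inv k f j.
Proof.
  intros k f Hf. induction j; intro Hj.
  - right. apply inv0.
  - destruct IHj as [G|I]; [lia| left; exact G|]. apply step; auto.
Qed.

Lemma invR_false : forall k f, ~ Inv k f (Rnum D Ec k).
Proof.
  intros k f [z [_ [H _]]].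
  destruct Nr_props as [HN1 [HN2 HN3]].
  assert (HR : INR (Rnum D Ec k) * (tt k * eps k) = Nr * Nr).
  { unfold Rnum. rewrite !mult_INR, !pow_INR, plus_INR. fold Nr. unfold tt, eps.
    change (INR 1) with 1. simpl. field. pose proof (pos_INR k). split; apply Rgt_not_eq; lra. }
  rewrite HR in H. pose proof (hinner_pos X (hsub x0 z)).
  pose proof (pos_INR D).
  assert (INR D * INR D < Nr * Nr) by nra. lra.
Qed.

Lemma main_sec : forall k f, monotone_nat f -> TheGoal k f.
Proof.
  intros k f Hf. destruct (all_j k f Hf (Rnum D Ec k) (le_n _)) as [G|I]; [exact G|].
  exfalso. exact (invR_false k f I).
Qed.

End Main.

Theorem mainTheorem12
  (X : HilbertSpace) (A : X -> X -> Prop) (J : R -> X -> X)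
  (alpha beta : nat -> R) (e : nat -> X) (x0 p : X)
  (a b B E : nat -> nat) (D Ec : nat) :
  maximal_monotone A ->
  is_resolvent A J ->
  A p (hzero X) ->
  (forall n, 0 < alpha n < 1) ->
  (forall n, 0 < beta n) ->
  monotone_nat a -> monotone_nat b -> monotone_nat B -> monotone_nat E ->
  (forall k n, (a k <= n)%nat -> alpha n <= 1 / (INR k + 1)) ->
  (forall n, beta n <= INR (b n)) ->
  (forall k n, (B k <= n)%nat -> INR k <= beta n) ->
  (forall k n, sum_from (fun i => hnorm (e i)) (E k + 1)%nat n <= 1 / (INR k + 1)) ->
  1 + sum_from (fun i => hnorm (e i)) 0%nat (E 0%nat + 1)%nat <= INR Ec ->
  hnorm (hsub x0 p) <= INR D ->
  forall (k : nat) (f : nat -> nat), monotone_nat f ->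
  exists n : nat, (n <= Psi a b B E D Ec k f)%nat /\
    exists x : X, hnorm (hsub x p) <= INR (Nrad D Ec) /\
      forall i : nat, (n <= i <= f n)%nat ->
        hnorm (hsub (J (beta i) x) x) <= 1 / (INR (f n) + 1) /\
        hinner X (hsub x0 x) (hsub (hppa J alpha beta e x0 i) x) <= 1 / (INR k + 1).
Proof.
  intros H1 H2 H3 H4 H5 H6 H7 H8 H9 H10 H11 H12 H13 H14 H15 k f Hf.
  exact (main_sec X A J alpha beta e x0 p a b B E D Ec H1 H2 H3 H4 H5 H6 H7 H8 H9 H10 H11 H12 H13 H14 H15 k f Hf).
Qed.
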